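(* Let $q^N$ be probability distributions on $\mathbb{Z}$ satisfying assumptions (1)–(5) below, let $\phi^N(\theta)=\sum_z q^N(z)e^{iz\theta}$ be the characteristic function of $q^N$, and let $L=N^{1/2}$. There are constants $a,b>0$ such that for all $N$ and $|\theta|\le\pi$, $$|\phi^N(\theta)|\le\begin{cases}1-bN\theta^2,&|\theta|\le 4/(2L+1),\\ 1-a,&4/(2L+1)<|\theta|\le\pi.\end{cases}$$ Consequently, for any $\varepsilon\in(0,\pi]$ there is $c>0$ independent of $N$ such that $|\phi^N(\theta)|\le e^{-c}$ whenever $\varepsilon/\sqrt N<|\theta|\le\pi$.
   Context: Assumptions: (1) $q^N(z)=q^N(-z)$; (2) $\sum_z z^2q^N(z)=\sigma_N^2N$ with $\sigma_N\to\sigma\in(0,\infty)$; (3) there is $h>0$ independent of $N$ with $q^N(z)\ge h/\sqrt N$ for $|z|\le N^{1/2}$; (4) $q^N(z)\le C\exp(-c|z|/\sqrt N)$ with $c,C>0$ independent of $N$; (5) $q^N(z)=0$ for $|z|>B\sqrt N\log N$ with $B$ independent of $N$. *)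

(* Defs.v *)
From Stdlib Require Import Reals ZArith Lra.
From Coquelicot Require Import Coquelicot.
Open Scope R_scope.

(* Symmetric enumeration of a sum over Z: term n = f 0 if n = 0,
   and f n + f (-n) otherwise. *)
Definition zterm (f : Z -> R) (n : nat) : R :=
  match n with
  | O => f 0%Z
  | _ => f (Z.of_nat n) + f (- Z.of_nat n)%Z
  end.

Definition zsum (f : Z -> R) : R := Series (zterm f).

Definition is_prob_Z (p : Z -> R) : Prop :=
  (forall z, 0 <= p z) /\ is_series (zterm p) 1.

Definition charfun (p : Z -> R) (theta : R) : C :=
  (zsum (fun z => p z * cos (IZR z * theta)),
   zsum (fun z => p z * sin (IZR z * theta))).

(* Main.v *)
Require Import Defs.
From Stdlib Require Import Reals ZArith Lra Lia Psatz.
From Coquelicot Require Import Coquelicot.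
Open Scope R_scope.

Lemma zsumS f n : sum_f_R0 (zterm f) (S n) =
  sum_f_R0 (zterm f) n + (f (Z.of_nat (S n)) + f (- Z.of_nat (S n))%Z).
Proof. reflexivity. Qed.

Lemma zsum0 f : sum_f_R0 (zterm f) 0 = f 0%Z.
Proof. reflexivity. Qed.

Lemma IZR_nat n : IZR (Z.of_nat n) = INR n.
Proof. now rewrite INR_IZR_INZ. Qed.

Lemma IZR_nnat n : IZR (- Z.of_nat n) = - INR n.
Proof. now rewrite opp_IZR, IZR_nat. Qed.

Lemma ps_le f g M : (forall z, (Z.abs z <= Z.of_nat M)%Z -> f z <= g z) ->
  sum_f_R0 (zterm f) M <= sum_f_R0 (zterm g) M.
Proof.
  induction M; intros H.
  - rewrite !zsum0; apply H; simpl; lia.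
  - rewrite !zsumS. apply Rplus_le_compat.
    + apply IHM; intros; apply H; lia.
    + apply Rplus_le_compat; apply H; lia.
Qed.

Lemma ps_scal c f M : sum_f_R0 (zterm (fun z => c * f z)) M = c * sum_f_R0 (zterm f) M.
Proof. induction M; [rewrite !zsum0; ring| rewrite !zsumS, IHM; ring]. Qed.

Lemma ps_plus f g M : sum_f_R0 (zterm (fun z => f z + g z)) M =
  sum_f_R0 (zterm f) M + sum_f_R0 (zterm g) M.
Proof. induction M; [rewrite !zsum0; ring| rewrite !zsumS, IHM; ring]. Qed.

Lemma ps_minus f g M : sum_f_R0 (zterm (fun z => f z - g z)) M =
  sum_f_R0 (zterm f) M - sum_f_R0 (zterm g) M.
Proof. induction M; [rewrite !zsum0; ring| rewrite !zsumS, IHM; ring]. Qed.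

Lemma ps_const c M : sum_f_R0 (zterm (fun _ => c)) M = c * (2 * INR M + 1).
Proof. induction M; [rewrite !zsum0; simpl; ring| rewrite !zsumS, IHM, S_INR; ring]. Qed.

Lemma ps_sq M : sum_f_R0 (zterm (fun z => IZR z ^ 2)) M =
  INR M * (INR M + 1) * (2 * INR M + 1) / 3.
Proof.
  induction M.
  - rewrite zsum0; simpl; field.
  - rewrite zsumS, IHM, IZR_nnat, IZR_nat, S_INR; field.
Qed.

Lemma ps_dir t M : sin (t/2) * sum_f_R0 (zterm (fun z => cos (IZR z * t))) M =
  sin ((INR M + /2) * t).
Proof.
  induction M.
  - rewrite zsum0. change (IZR 0) with 0. rewrite Rmult_0_l, cos_0, Rmult_1_r. simpl INR. f_equal; field.
  - rewrite zsumS, Rmult_plus_distr_l, IHM, IZR_nnat, IZR_nat.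
    rewrite Ropp_mult_distr_l_reverse, cos_neg.
    set (b := INR (S M) * t). set (a := t/2).
    assert (E1 : (INR M + /2) * t = b - a) by (unfold a, b; rewrite S_INR; field).
    assert (E2 : (INR (S M) + /2) * t = b + a) by (unfold a, b; field).
    rewrite E1, E2, sin_plus, sin_minus. ring.
Qed.

Lemma zterm_nonneg f : (forall z, 0 <= f z) -> forall n, 0 <= zterm f n.
Proof. intros H [|n]; simpl; [apply H|]. apply Rplus_le_le_0_compat; apply H. Qed.

Lemma Series_zero : Series (fun _ => 0) = 0.
Proof.
  unfold Series. rewrite (Lim_seq_ext _ (fun _ => 0)). rewrite Lim_seq_const; reflexivity.
  intros n. rewrite sum_n_const. apply Rmult_0_r.
Qed.

Lemma ser_ge f M : (forall z, 0 <= f z) -> ex_series (zterm f) ->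
  sum_f_R0 (zterm f) M <= Series (zterm f).
Proof.
  intros Hf He. rewrite (Series_incr_n _ (S M)); [|lia|auto]. simpl pred.
  assert (0 <= Series (fun k => zterm f (S M + k)%nat)).
  { rewrite <- Series_zero. apply Series_le.
    - intros; split; [lra| apply zterm_nonneg; auto].
    - now apply (ex_series_incr_n (zterm f) (S M)). }
  lra.
Qed.

Lemma ex_zterm_mul p g : (forall z, 0 <= p z) -> ex_series (zterm p) ->
  (forall z, Rabs (g z) <= 2) -> ex_series (zterm (fun z => p z * g z)).
Proof.
  intros Hp He Hg.
  apply (@ex_series_le R_AbsRing R_CompleteNormedModule _ (fun n => 2 * zterm p n)).
  - intros n. change (norm (zterm (fun z => p z * g z) n)) with (Rabs (zterm (fun z => p z * g z) n)).
    assert (K : forall z, Rabs (p z * g z) <= 2 * p z).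
    { intros z. rewrite Rabs_mult, (Rabs_pos_eq (p z)) by auto.
      specialize (Hp z); specialize (Hg z); nra. }
    destruct n; simpl; [apply K|].
    eapply Rle_trans; [apply Rabs_triang|]. pose proof (K (Z.pos (Pos.of_succ_nat n))).
    pose proof (K (Z.neg (Pos.of_succ_nat n))). lra.
  - now apply (ex_series_scal_l 2 (zterm p)).
Qed.

Definition phi (p : Z -> R) (t : R) := zsum (fun z => p z * cos (IZR z * t)).

Lemma one_pm p t s : (forall z, 0 <= p z) -> is_series (zterm p) 1 -> Rabs s <= 1 ->
  1 + s * phi p t = Series (zterm (fun z => p z * (1 + s * cos (IZR z * t)))).
Proof.
  intros Hp Hs Hsb. unfold phi, zsum.
  assert (Ep : ex_series (zterm p)) by (exists 1; auto).
  assert (Ec : ex_series (zterm (fun z => p z * cos (IZR z * t)))).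
  { apply ex_zterm_mul; auto. intros; pose proof (COS_bound (IZR z * t)). apply Rabs_le; lra. }
  rewrite (Series_ext (zterm (fun z => p z * (1 + s * cos (IZR z * t)))) (fun n => zterm p n + s * zterm (fun z => p z * cos (IZR z * t)) n)).
  2:{ intros [|n]; unfold zterm; ring. }
  rewrite Series_plus; auto.
  - rewrite Series_scal_l. rewrite (is_series_unique _ 1 Hs). reflexivity.
  - apply (ex_series_ext (fun n => zterm (fun z => p z * cos (IZR z * t)) n * s)).
    + intros. apply Rmult_comm.
    + now apply ex_series_scal_r.
Qed.

Lemma Rabs_case x : Rabs x = x \/ Rabs x = - x.
Proof. unfold Rabs; destruct Rcase_abs; auto. Qed.

Lemma sin_lb y : 0 <= y <= PI -> y - y^3/6 <= sin y.
Proof.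
  intros [H1 H2]. destruct (sin_bound y 0 H1 H2) as [H _].
  unfold sin_approx, sin_term in H. simpl in H. eapply Rle_trans; [|exact H]. right; field.
Qed.

Lemma cos_lb y : -PI/2 <= y <= PI/2 -> 1 - y^2/2 <= cos y.
Proof.
  intros [H1 H2]. destruct (cos_bound y 0 H1 H2) as [H _].
  unfold cos_approx, cos_term in H. simpl in H. eapply Rle_trans; [|exact H]. right; field.
Qed.

Lemma sin_lb3 y : 0 <= y <= 2 -> y / 3 <= sin y.
Proof.
  intros Hy. pose proof PI2_3_2. pose proof (sin_lb y ltac:(lra)). nra.
Qed.

Lemma sin_lb23 y : 0 <= y <= 1/2 -> 23 * y / 24 <= sin y.
Proof.
  intros Hy. pose proof PI2_3_2. pose proof (sin_lb y ltac:(lra)). nra.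
Qed.

Lemma sin_lb56 y : 0 <= y <= 1 -> 5 * y / 6 <= sin y.
Proof.
  intros Hy. pose proof PI2_3_2. pose proof (sin_lb y ltac:(lra)). nra.
Qed.

Lemma one_minus_cos x : 1 - cos x = 2 * sin (x/2) ^ 2.
Proof. replace x with (2 * (x/2)) at 1 by field. rewrite cos_2a_sin. ring. Qed.

Lemma one_plus_cos x : 1 + cos x = 2 * cos (x/2) ^ 2.
Proof. replace x with (2 * (x/2)) at 1 by field. rewrite cos_2a_cos. ring. Qed.

Lemma Ta x : Rabs x <= 2 -> x^2/3 <= 1 - cos x.
Proof.
  intros Hx. rewrite one_minus_cos.
  assert (E : sin (x/2) ^ 2 = sin (Rabs (x/2)) ^ 2).
  { destruct (Rabs_case (x/2)) as [E|E]; rewrite E; [auto| rewrite sin_neg; ring]. }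
  rewrite E. assert (Ha : 0 <= Rabs (x/2) <= 1).
  { split; [apply Rabs_pos|]. unfold Rdiv; rewrite Rabs_mult, Rabs_inv, (Rabs_pos_eq 2) by lra. lra. }
  pose proof (sin_lb56 _ Ha).
  assert (x^2 = 4 * Rabs (x/2) ^ 2).
  { rewrite (pow2_abs (x/2)). field. }
  nra.
Qed.

Lemma Tb x : Rabs x <= 2 -> 1/2 <= 1 + cos x.
Proof.
  intros Hx. rewrite one_plus_cos. pose proof PI2_3_2.
  assert (Ha : -PI/2 <= x/2 <= PI/2).
  { apply Rabs_le_between in Hx; lra. }
  pose proof (cos_lb _ Ha).
  assert ((x/2)^2 <= 1). { rewrite <- pow2_abs. apply Rabs_le_between in Hx.
    destruct (Rabs_case (x/2)) as [E|E]; rewrite E; nra. }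
  nra.
Qed.

Lemma phi_abs p t : phi p t = phi p (Rabs t).
Proof.
  unfold phi, zsum. apply Series_ext. intros [|n]; simpl;
  destruct (Rabs_case t) as [E|E]; rewrite E; auto;
  rewrite ?Ropp_mult_distr_r_reverse, ?cos_neg; auto.
Qed.

Lemma imag0 p t : (forall z, p z = p (- z)%Z) ->
  zsum (fun z => p z * sin (IZR z * t)) = 0.
Proof.
  intros Hs. unfold zsum. rewrite (Series_ext _ (fun _ => 0)); [apply Series_zero|].
  intros [|n].
  - simpl. rewrite Rmult_0_l, sin_0; ring.
  - unfold zterm. rewrite <- (Hs (Z.of_nat (S n))), opp_IZR, Ropp_mult_distr_l_reverse, sin_neg. ring.
Qed.

Lemma getM L : 1 < L -> exists M : nat, (1 <= M)%nat /\ INR M <= L < INR M + 1.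
Proof.
  intros HL. destruct (archimed L) as [A B].
  assert (Hk : (1 < up L)%Z) by (apply lt_IZR; lra).
  exists (Z.to_nat (up L - 1)).
  rewrite INR_IZR_INZ, Z2Nat.id by lia. rewrite minus_IZR. split; [lia|]. simpl IZR. lra.
Qed.

Lemma absz_le z M L : (Z.abs z <= Z.of_nat M)%Z -> INR M <= L -> Rabs (IZR z) <= L.
Proof.
  intros H1 H2. rewrite <- abs_IZR. apply IZR_le in H1. rewrite IZR_nat in H1. lra.
Qed.

Lemma lowG p u s K : (forall z, 0 <= p z) -> is_series (zterm p) 1 -> Rabs s <= 1 ->
  sum_f_R0 (zterm (fun z => p z * (1 + s * cos (IZR z * u)))) K <= 1 + s * phi p u.
Proof.
  intros Hp Hs Hsb. rewrite (one_pm p u s Hp Hs Hsb).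
  assert (Hb : forall z, 0 <= 1 + s * cos (IZR z * u) <= 2).
  { intros z. pose proof (COS_bound (IZR z * u)). apply Rabs_le_between in Hsb.
    assert (Rabs (s * cos (IZR z * u)) <= 1).
    { rewrite Rabs_mult. assert (Rabs (cos (IZR z * u)) <= 1) by (apply Rabs_le; lra).
      apply Rabs_le_between in Hsb. pose proof (Rabs_pos s). pose proof (Rabs_pos (cos (IZR z * u))). nra. }
    apply Rabs_le_between in H0. lra. }
  apply ser_ge.
  - intros z. apply Rmult_le_pos; [auto| apply Hb].
  - apply ex_zterm_mul; auto. exists 1; auto. intros z; specialize (Hb z). apply Rabs_le; lra.
Qed.

Lemma abs_from p u e : e <= 1 + 1 * phi p u -> e <= 1 + -1 * phi p u -> Rabs (phi p u) <= 1 - e.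
Proof. intros. apply Rabs_le; lra. Qed.

Lemma core_small p L h u (HL : 1 < L) (Hh : 0 < h) (Hp : forall z, 0 <= p z)
  (Hs : is_series (zterm p) 1) (H3 : forall z, Rabs (IZR z) <= L -> h / L <= p z)
  (Hu : 0 <= u) (Hu2 : u <= 4 / (2 * L + 1)) :
  Rabs (phi p u) <= 1 - h / 36 * (L * L) * u ^ 2.
Proof.
  destruct (getM L HL) as [M [HM1 [HM2 HM3]]].
  assert (Hm1 : 1 <= INR M) by (apply (le_INR 1); lia).
  set (m := INR M) in *.
  assert (HLp : 0 < L) by lra.
  assert (Lu : L * u <= 2).
  { assert (u * (2 * L + 1) <= 4).
    { apply (Rmult_le_compat_r (2 * L + 1)) in Hu2; [|lra].
      unfold Rdiv in Hu2. rewrite Rmult_assoc, Rinv_l in Hu2; lra. }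
    nra. }
  assert (HhL : 0 < h / L) by (apply Rdiv_lt_0_compat; lra).
  assert (Hxz : forall z, (Z.abs z <= Z.of_nat M)%Z -> Rabs (IZR z * u) <= 2 /\ h / L <= p z).
  { intros z Hz. pose proof (absz_le z M L Hz HM2). split; [|apply H3; auto].
    rewrite Rabs_mult, (Rabs_pos_eq u) by lra. pose proof (Rabs_pos (IZR z)). nra. }
  apply abs_from.
  - eapply Rle_trans; [|apply (lowG p u 1 M); auto; rewrite Rabs_R1; lra].
    eapply Rle_trans; [|apply (ps_le (fun _ => h / L * (1/2)))].
    + rewrite ps_const.
      assert (h / L * (1 / 2) * (2 * m + 1) >= h / 2).
      { replace (h / L * (1 / 2) * (2 * m + 1)) with (h / 2 * ((2 * m + 1) / L)) by (field; lra).
        assert ((2 * m + 1) / L >= 1).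
        { apply Rle_ge. apply (Rmult_le_reg_r L); [lra|]. unfold Rdiv.
          rewrite Rmult_assoc, Rinv_l; lra. }
        nra. }
      assert (0 <= L * u) by (apply Rmult_le_pos; lra).
      assert (L * L * u ^ 2 <= 4) by (replace (L * L * u ^ 2) with ((L * u) * (L * u)) by ring; nra).
      replace (h / 36 * (L * L) * u ^ 2) with (h / 36 * (L * L * u ^ 2)) by ring.
      assert (h / 36 * (L * L * u ^ 2) <= h / 36 * 4) by (apply Rmult_le_compat_l; lra).
      fold m. lra.
    + intros z Hz. destruct (Hxz z Hz) as [A B]. pose proof (Tb _ A).
      apply Rmult_le_compat; lra.
  - eapply Rle_trans; [|apply (lowG p u (-1) M); auto; unfold Rabs; destruct Rcase_abs; lra].
    eapply Rle_trans; [|apply (ps_le (fun z => h / L * (u ^ 2 / 3) * IZR z ^ 2))].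
    + rewrite ps_scal, ps_sq. fold m.
      set (P := m * (m + 1) * (2 * m + 1)).
      assert (HP : L * L * L / 2 <= P).
      { unfold P. assert (L / 2 <= m) by lra. assert (L <= m + 1) by lra.
        assert (L <= 2 * m + 1) by lra.
        replace (L * L * L / 2) with (L / 2 * L * L) by field.
        apply Rmult_le_compat; try nra. }
      replace (h / L * (u ^ 2 / 3) * (P / 3)) with (h * u ^ 2 / L * (P / 9)) by (field; lra).
      replace (h / 36 * (L * L) * u ^ 2) with (h * u ^ 2 / L * (L * L * L / 36)) by (field; lra).
      apply Rmult_le_compat_l.
      * apply Rmult_le_pos; [|left; apply Rinv_0_lt_compat; lra]. nra.
      * assert (0 <= L * L * L) by (apply Rmult_le_pos; nra). lra.
    + intros z Hz. destruct (Hxz z Hz) as [A B]. pose proof (Ta _ A). set (w := IZR z) in *. clearbody w.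
      assert (E1 : 1 + -1 * cos (w * u) = 1 - cos (w * u)) by ring.
      assert (E2 : h / L * (u ^ 2 / 3) * w ^ 2 = h / L * ((w * u) ^ 2 / 3)) by (unfold Rdiv; ring).
      rewrite E1, E2.
      apply Rmult_le_compat; try lra. apply Rmult_le_pos; [apply pow2_ge_0|lra].
Qed.

Lemma core_large p L h u (HL : 1 < L) (Hh : 0 < h) (Hp : forall z, 0 <= p z)
  (Hs : is_series (zterm p) 1) (H3 : forall z, Rabs (IZR z) <= L -> h / L <= p z)
  (Hu : u <= PI) (Hu2 : 4 / (2 * L + 1) < u) :
  Rabs (phi p u) <= 1 - 4 * h / 729.
Proof.
  assert (HLp : 0 < L) by lra.
  assert (Hu3 : 4 < u * (2 * L + 1)).
  { apply (Rmult_lt_compat_r (2 * L + 1)) in Hu2; [|lra].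
    unfold Rdiv in Hu2. rewrite Rmult_assoc, Rinv_l in Hu2; lra. }
  assert (Hu0 : 0 < u) by nra.
  assert (HhL : 0 < h / L) by (apply Rdiv_lt_0_compat; lra).
  pose proof PI2_3_2 as HPI. pose proof PI_4 as HPI4.
  destruct (Rlt_or_le L 4) as [HL4|HL4].
  -
    assert (HhL4 : h / 4 <= h / L).
    { unfold Rdiv. apply Rmult_le_compat_l; [lra|]. apply Rinv_le_contravar; lra. }
    assert (Hp0 : h / L <= p 0%Z) by (apply H3; rewrite Rabs_R0; lra).
    assert (Hp1 : h / L <= p 1%Z) by (apply H3; rewrite Rabs_R1; lra).
    assert (Hpm1 : h / L <= p (-1)%Z).
    { apply H3. unfold Rabs; destruct Rcase_abs; lra. }
    apply abs_from.
    + eapply Rle_trans; [|apply (lowG p u 1 0); auto; rewrite Rabs_R1; lra].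
      rewrite zsum0. change (IZR 0) with 0. rewrite Rmult_0_l, cos_0. lra.
    + eapply Rle_trans; [|apply (lowG p u (-1) 1); auto; unfold Rabs; destruct Rcase_abs; lra].
      rewrite zsumS, zsum0. change (IZR 0) with 0. change (Z.of_nat 1) with 1%Z.
      rewrite opp_IZR. change (IZR 1) with 1. change (- (1))%Z with (-1)%Z.
      rewrite Rmult_0_l, cos_0.
      replace (- (1) * u) with (- u) by ring. replace (1 * u) with u by ring. rewrite cos_neg.
      assert (Hc : 8 / 729 <= 1 - cos u).
      { rewrite one_minus_cos. pose proof (sin_lb3 (u/2) ltac:(lra)).
        assert (u > 4/9).
        { assert (u * 9 > 4) by nra. lra. }
        nra. }
      assert (E : 1 + -1 * cos u = 1 - cos u) by ring. rewrite E.
      assert (p 1%Z * (1 - cos u) >= h / 4 * (8 / 729)) by (apply Rle_ge, Rmult_le_compat; lra).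
      assert (p (-1)%Z * (1 - cos u) >= h / 4 * (8 / 729)) by (apply Rle_ge, Rmult_le_compat; lra).
      assert (p 0%Z * (1 + -1 * 1) = 0) by ring. lra.
  - destruct (getM L HL) as [M [HM1 [HM2 HM3]]].
    assert (HM4 : (3 < M)%nat).
    { apply INR_lt. replace (INR 3) with 3 by (simpl; ring). lra. }
    assert (Hm4 : 4 <= INR M) by (apply (le_INR 4) in HM4; replace (INR 4) with 4 in HM4 by (simpl; ring); lra).
    set (m := INR M) in *.
    set (D := sum_f_R0 (zterm (fun z => cos (IZR z * u))) M).
    assert (Hs2 : 0 < sin (u/2)) by (apply sin_gt_0; lra).
    assert (HD1 : Rabs D * sin (u/2) <= 1).
    { rewrite <- (Rabs_pos_eq (sin (u/2))) by lra. rewrite <- Rabs_mult, Rmult_comm.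
      unfold D. rewrite ps_dir. pose proof (SIN_bound ((INR M + / 2) * u)). apply Rabs_le; lra. }
    assert (HD : Rabs D <= 3 * (2 * m + 1) / 4).
    { pose proof (Rabs_pos D).
      destruct (Rle_or_lt u 1) as [Hu1|Hu1].
      - pose proof (sin_lb23 (u/2) ltac:(lra)).
        assert (HA : Rabs D * u <= 48 / 23) by nra.
        assert (HB : u * (2 * m + 3) > 4) by nra.
        assert (HC : Rabs D * u * (2 * m + 3) <= 48 / 23 * (2 * m + 3)) by (apply Rmult_le_compat_r; lra).
        assert (HE : Rabs D * u * (2 * m + 3) >= 4 * Rabs D) by nra.
        lra.
      - pose proof (sin_lb3 (u/2) ltac:(lra)). nra. }
    assert (Hxz : forall z, (Z.abs z <= Z.of_nat M)%Z -> h / L <= p z).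
    { intros z Hz. apply H3. exact (absz_le z M L Hz HM2). }
    assert (Hlow : forall s, Rabs s <= 1 -> (s = 1 \/ s = -1) ->
                   4 * h / 729 <= 1 + s * phi p u).
    { intros s Hsb Hs1.
      eapply Rle_trans; [|apply (lowG p u s M); auto].
      eapply Rle_trans; [|apply (ps_le (fun z => h / L * (1 + s * cos (IZR z * u))))].
      - rewrite ps_scal, ps_plus, ps_const, ps_scal. fold D. fold m.
        assert (Hsd : 2 * m + 1 + s * D >= (2 * m + 1) / 4).
        { destruct Hs1 as [E|E]; rewrite E; apply Rabs_le_between in HD; lra. }
        assert (h / L * (1 * (2 * m + 1) + s * D) >= h / L * ((2 * m + 1) / 4)).
        { apply Rle_ge, Rmult_le_compat_l; lra. }
        assert (h / L * ((2 * m + 1) / 4) >= h / 4).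
        { replace (h / L * ((2 * m + 1) / 4)) with (h / 4 * ((2 * m + 1) / L)) by (field; lra).
          assert ((2 * m + 1) / L >= 1).
          { apply Rle_ge. apply (Rmult_le_reg_r L); [lra|]. unfold Rdiv.
            rewrite Rmult_assoc, Rinv_l; lra. }
          nra. }
        lra.
      - intros z Hz. apply Rmult_le_compat_r.
        + pose proof (COS_bound (IZR z * u)). destruct Hs1 as [E|E]; rewrite E; lra.
        + apply Hxz; auto. }
    apply abs_from; apply Hlow; auto; unfold Rabs; destruct Rcase_abs; lra.
Qed.

Theorem lemma6 (q : nat -> Z -> R) (N0 : nat) (HN0 : (2 <= N0)%nat)
  (sigma : nat -> R) (h B C0 c0 : R)
  (Hprob : forall N, (N0 <= N)%nat -> is_prob_Z (q N))
  (H1 : forall N, (N0 <= N)%nat -> forall z, q N z = q N (- z)%Z)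
  (H2 : forall N, (N0 <= N)%nat ->
        zsum (fun z => (IZR z) ^ 2 * q N z) = (sigma N) ^ 2 * INR N)
  (H2lim : exists s, 0 < s /\ is_lim_seq sigma s)
  (Hh : 0 < h)
  (H3 : forall N, (N0 <= N)%nat -> forall z,
        Rabs (IZR z) <= sqrt (INR N) -> h / sqrt (INR N) <= q N z)
  (HC0 : 0 < C0) (Hc0 : 0 < c0)
  (H4 : forall N, (N0 <= N)%nat -> forall z,
        q N z <= C0 * exp (- c0 * Rabs (IZR z) / sqrt (INR N)))
  (H5 : forall N, (N0 <= N)%nat -> forall z,
        Rabs (IZR z) > B * sqrt (INR N) * ln (INR N) -> q N z = 0) :
  (exists a b : R, 0 < a /\ 0 < b /\
     forall N, (N0 <= N)%nat -> forall theta, Rabs theta <= PI ->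
       (Rabs theta <= 4 / (2 * sqrt (INR N) + 1) ->
          Cmod (charfun (q N) theta) <= 1 - b * INR N * theta ^ 2) /\
       (4 / (2 * sqrt (INR N) + 1) < Rabs theta ->
          Cmod (charfun (q N) theta) <= 1 - a))
  /\
  (forall eps, 0 < eps <= PI -> exists c, 0 < c /\
     forall N, (N0 <= N)%nat -> forall theta,
       eps / sqrt (INR N) < Rabs theta <= PI ->
       Cmod (charfun (q N) theta) <= exp (- c)).
Proof.
  set (a := 4 * h / 729). set (b := h / 36).
  assert (Ha : 0 < a) by (unfold a; lra). assert (Hb : 0 < b) by (unfold b; lra).
  assert (Hmain : forall N, (N0 <= N)%nat -> forall theta, Rabs theta <= PI ->
       (Rabs theta <= 4 / (2 * sqrt (INR N) + 1) ->
          Cmod (charfun (q N) theta) <= 1 - b * INR N * theta ^ 2) /\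
       (4 / (2 * sqrt (INR N) + 1) < Rabs theta ->
          Cmod (charfun (q N) theta) <= 1 - a)).
  { intros N HN theta Ht.
    destruct (Hprob N HN) as [Hp Hs].
    assert (HN2 : 2 <= INR N).
    { apply (le_INR 2) in HN0. apply le_INR in HN. replace (INR 2) with 2 in HN0 by (simpl; ring). lra. }
    pose proof (H3 N HN) as H3N.
    set (L := sqrt (INR N)) in *.
    assert (HL : 1 < L) by (unfold L; rewrite <- sqrt_1; apply sqrt_lt_1_alt; lra).
    assert (HLL : INR N = L * L) by (unfold L; rewrite sqrt_sqrt; lra).
    assert (Ec : Cmod (charfun (q N) theta) = Rabs (phi (q N) (Rabs theta))).
    { rewrite <- phi_abs. unfold charfun. rewrite imag0 by (apply H1; auto). apply Cmod_R. }
    rewrite Ec. split; intros.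
    - rewrite HLL. rewrite <- (pow2_abs theta). unfold b.
      apply (core_small (q N) L h (Rabs theta)); auto. apply Rabs_pos.
    - apply (core_large (q N) L h (Rabs theta)); auto. }
  split.
  { exists a, b. auto. }
  intros eps Heps.
  set (k := Rmin (Rmin a (b * eps ^ 2)) (1 / 2)).
  assert (Hbe : 0 < b * eps ^ 2) by (apply Rmult_lt_0_compat; [lra| apply pow_lt; lra]).
  assert (Hk : 0 < k /\ k <= a /\ k <= b * eps ^ 2 /\ k <= 1 / 2).
  { unfold k. repeat split.
    - repeat apply Rmin_glb_lt; lra.
    - eapply Rle_trans; [apply Rmin_l|apply Rmin_l].
    - eapply Rle_trans; [apply Rmin_l|apply Rmin_r].
    - apply Rmin_r. }
  exists (- ln (1 - k)). split.
  - assert (ln (1 - k) < 0) by (rewrite <- ln_1; apply ln_increasing; lra). lra.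
  - intros N HN theta [Ht1 Ht2]. rewrite Ropp_involutive, exp_ln by lra.
    destruct (Rle_or_lt (Rabs theta) (4 / (2 * sqrt (INR N) + 1))) as [Hs|Hs].
    + eapply Rle_trans; [apply (proj1 (Hmain N HN theta Ht2)); auto|].
      assert (HN2 : 2 <= INR N).
      { apply (le_INR 2) in HN0. apply le_INR in HN. replace (INR 2) with 2 in HN0 by (simpl; ring). lra. }
      set (L := sqrt (INR N)) in *.
      assert (HL : 1 < L) by (unfold L; rewrite <- sqrt_1; apply sqrt_lt_1_alt; lra).
      assert (HLL : INR N = L * L) by (unfold L; rewrite sqrt_sqrt; lra).
      assert (He : eps < L * Rabs theta).
      { apply (Rmult_lt_compat_r L) in Ht1; [|lra]. unfold Rdiv in Ht1.
        rewrite Rmult_assoc, Rinv_l, Rmult_1_r in Ht1; lra. }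
      assert (He2 : eps ^ 2 <= INR N * theta ^ 2).
      { rewrite HLL, <- (pow2_abs theta). nra. }
      assert (b * eps ^ 2 <= b * (INR N * theta ^ 2)) by (apply Rmult_le_compat_l; lra).
      lra.
    + eapply Rle_trans; [apply (proj2 (Hmain N HN theta Ht2)); auto|]. lra.
Qed.
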